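(* Let $n\ge3$ and let $A_1,\dots,A_n$ be events in a probability space. Then \[ \Pr\Big(\bigcup_{i=1}^n A_i\Big) \ge \frac{1}{n-2}\Big(\sum_{i=1}^n\Pr(A_i) - \frac{2n-3}{\binom n2}\sum_{1\le i<j\le n}\Pr(A_i\cap A_j) + \frac{3}{\binom n2}\sum_{1\le i<j<k\le n}\Pr(A_i\cap A_j\cap A_k)\Big). \] *)

(* Defs.v *)
From Stdlib Require Import Reals.
Open Scope R_scope.

Record prob_space (Omega : Type) := {
  measurable : (Omega -> Prop) -> Prop;
  meas_full : measurable (fun _ => True);
  meas_compl : forall A, measurable A -> measurable (fun w => ~ A w);
  meas_cunion : forall F : nat -> (Omega -> Prop),
      (forall k, measurable (F k)) -> measurable (fun w => exists k, F k w);
  pr : (Omega -> Prop) -> R;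
  pr_nonneg : forall A, measurable A -> 0 <= pr A;
  pr_full : pr (fun _ => True) = 1;
  pr_sigma_additive : forall F : nat -> (Omega -> Prop),
      (forall k, measurable (F k)) ->
      (forall i j w, i <> j -> F i w -> F j w -> False) ->
      infinite_sum (fun k => pr (F k)) (pr (fun w => exists k, F k w))
}.

Arguments measurable {Omega} _ _.
Arguments pr {Omega} _ _.

Fixpoint sumR (n : nat) (f : nat -> R) : R :=
  match n with
  | O => 0
  | S m => sumR m f + f m
  end.

(* Main.v *)
Require Import Defs.
From Stdlib Require Import Reals Lra Lia Classical FunctionalExtensionality PropExtensionality Factorial.
Open Scope R_scope.

Lemma sumR_ext n f g : (forall i, (i < n)%nat -> f i = g i) -> sumR n f = sumR n g.
Proof. induction n; intros H; simpl; auto. rewrite IHn by (intros; apply H; lia). rewrite H by lia. auto. Qed.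

Lemma sumR_shift n f : sumR (S n) f = f 0%nat + sumR n (fun c => f (S c)).
Proof. induction n; simpl in *; [ring|]. rewrite IHn. ring. Qed.

Lemma sumR_plus n f g : sumR n (fun i => f i + g i) = sumR n f + sumR n g.
Proof. induction n; simpl; [ring|]. rewrite IHn; ring. Qed.

Lemma sumR_zero n : sumR n (fun _ => 0) = 0.
Proof. induction n; simpl; [ring|]. rewrite IHn; ring. Qed.

Lemma sumR_le n f g : (forall i, (i < n)%nat -> f i <= g i) -> sumR n f <= sumR n g.
Proof. induction n; intros H; simpl; [lra|]. pose proof (H n ltac:(lia)). pose proof (IHn ltac:(intros; apply H; lia)). lra. Qed.

Lemma sumR_lin3 N a b d (f1 f2 f3 q : nat -> R) :
  sumR N (fun c => (a * (f1 c - b * f2 c + d * f3 c)) * q c) =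
  a * (sumR N (fun c => f1 c * q c) - b * sumR N (fun c => f2 c * q c) + d * sumR N (fun c => f3 c * q c)).
Proof. induction N; simpl; [ring|]. rewrite IHN; ring. Qed.

Lemma sum_step L (w' w x y yS : nat -> R) : (forall c, w' (S c) = w' c + w c) -> yS 0%nat = 0 ->
  (forall c, yS (S c) = y c) -> y L = 0 ->
  sumR (S L) (fun c => w' c * (x c + yS c)) = sumR (S L) (fun c => w' c * (x c + y c)) + sumR (S L) (fun c => w c * y c).
Proof.
  intros Hw H0 HS HL.
  rewrite (sumR_ext (S L) (fun c => w' c * (x c + yS c)) (fun c => w' c * x c + w' c * yS c)) by (intros; ring).
  rewrite (sumR_ext (S L) (fun c => w' c * (x c + y c)) (fun c => w' c * x c + w' c * y c)) by (intros; ring).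
  rewrite !sumR_plus. rewrite (sumR_shift L (fun c => w' c * yS c)).
  rewrite (sumR_ext L (fun c => w' (S c) * yS (S c)) (fun c => w' c * y c + w c * y c)) by (intros; rewrite Hw, HS; ring).
  rewrite sumR_plus. cbn [sumR]. rewrite H0, HL. ring.
Qed.

Lemma C_n_2 n : (2 <= n)%nat -> C n 2 = INR n * (INR n - 1) / 2.
Proof.
  intros Hn. destruct n as [|[|p]]; try lia. unfold C.
  replace (S (S p) - 2)%nat with p by lia.
  rewrite !fact_simpl, !mult_INR. simpl (fact 2). pose proof (INR_fact_neq_0 p).
  rewrite !S_INR. simpl INR. field. auto.
Qed.
Section Meas.
Variable Omega : Type.
Variable P : prob_space Omega.

Lemma ev_eq (X Y : Omega -> Prop) : (forall w, X w <-> Y w) -> X = Y.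
Proof. intros H; apply functional_extensionality; intro w; apply propositional_extensionality; auto. Qed.

Lemma meas_empty : measurable P (fun _ => False).
Proof. replace (fun _ : Omega => False) with (fun w : Omega => ~ True) by (apply ev_eq; tauto).
  apply meas_compl, meas_full. Qed.

Lemma meas_or X Y : measurable P X -> measurable P Y -> measurable P (fun w => X w \/ Y w).
Proof.
  intros HX HY.
  pose proof (meas_cunion _ P (fun k => match k with O => X | _ => Y end)) as H.
  replace (fun w => X w \/ Y w) with (fun w => exists k:nat, (match k with O => X | _ => Y end) w).
  - apply H. intros [|k]; auto.
  - apply ev_eq. intros w; split.
    + intros [[|k] Hk]; auto.
    + intros [H1|H1]; [exists O | exists 1%nat]; auto.
Qed.

Lemma meas_and X Y : measurable P X -> measurable P Y -> measurable P (fun w => X w /\ Y w).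
Proof.
  intros HX HY.
  replace (fun w => X w /\ Y w) with (fun w => ~ (~ X w \/ ~ Y w)).
  - apply meas_compl, meas_or; apply meas_compl; auto.
  - apply ev_eq. intros w; split.
    + intros H; split; apply NNPP; intro; apply H; auto.
    + intros [] [|]; auto.
Qed.

Lemma meas_prop (Q : Prop) : measurable P (fun _ => Q).
Proof.
  destruct (classic Q) as [HQ|HQ].
  - replace (fun _ : Omega => Q) with (fun _ : Omega => True) by (apply ev_eq; tauto). apply meas_full.
  - replace (fun _ : Omega => Q) with (fun _ : Omega => False) by (apply ev_eq; tauto). apply meas_empty.
Qed.

Lemma sum_const a n : sum_f_R0 (fun _ => a) n = INR (S n) * a.
Proof. induction n; simpl sum_f_R0. simpl; ring. rewrite IHn. rewrite (S_INR (S n)). ring. Qed.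

Lemma pr_empty : pr P (fun _ => False) = 0.
Proof.
  pose proof (pr_sigma_additive _ P (fun _ => fun _ => False) (fun _ => meas_empty) (fun i j w _ H _ => H)) as H.
  cbv beta in H. replace (fun w : Omega => exists k:nat, False) with (fun _:Omega => False) in H by (apply ev_eq; firstorder).
  set (p := pr P (fun _ => False)) in *.
  destruct (Req_dec p 0) as [|Hp]; auto. exfalso.
  destruct (H (Rabs p)) as [N HN]. apply Rabs_pos_lt; auto.
  specialize (HN (S N) ltac:(lia)). unfold R_dist in HN. rewrite sum_const in HN.
  replace (INR (S (S N)) * p - p) with (INR (S N) * p) in HN by (rewrite (S_INR (S N)); ring).
  rewrite Rabs_mult, (Rabs_right (INR (S N))) in HN by (apply Rle_ge, pos_INR).
  assert (1 <= INR (S N)) by (rewrite S_INR; pose proof (pos_INR N); lra).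
  pose proof (Rabs_pos_lt p Hp). nra.
Qed.

Lemma pr_add2 X Y : measurable P X -> measurable P Y -> (forall w, X w -> Y w -> False) ->
  pr P (fun w => X w \/ Y w) = pr P X + pr P Y.
Proof.
  intros HX HY HD.
  set (F := fun k : nat => match k with O => X | 1%nat => Y | _ => fun _ : Omega => False end).
  assert (HF : forall k, measurable P (F k)) by (intros [|[|k]]; simpl; auto using meas_empty).
  assert (HFD : forall i j w, i <> j -> F i w -> F j w -> False).
  { intros i j w Hij Hi Hj. destruct i as [|[|i]], j as [|[|j]]; simpl in *;
      try (exfalso; apply Hij; reflexivity); eauto. }
  pose proof (pr_sigma_additive _ P F HF HFD) as H.
  replace (fun w => exists k, F k w) with (fun w => X w \/ Y w) in H.
  2:{ apply ev_eq; intros w; split.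
      - intros [H1|H1]; [exists O | exists 1%nat]; auto.
      - intros [[|[|k]] Hk]; simpl in Hk; tauto. }
  apply (uniqueness_sum _ _ _ H).
  assert (Hs : forall n, (1 <= n)%nat -> sum_f_R0 (fun k => pr P (F k)) n = pr P X + pr P Y).
  { induction n; intros Hn; [lia|]. destruct n; [simpl; reflexivity|].
    rewrite tech5, IHn by lia. simpl F. rewrite pr_empty. ring. }
  intros eps Heps. exists 1%nat. intros n Hn. rewrite Hs by lia. unfold R_dist.
  rewrite Rminus_diag, Rabs_R0. auto.
Qed.
End Meas.
Section Count.
Variable Omega : Type.
Variable A : nat -> Omega -> Prop.

Fixpoint cnt (m c : nat) (w : Omega) {struct m} : Prop :=
  match m with
  | O => c = O
  | S m' => (~ A m' w /\ cnt m' c w) \/ (A m' w /\ match c with O => False | S c' => cnt m' c' w end)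
  end.

Definition cntS m c w := match c with O => False | S c' => cnt m c' w end.

Lemma cnt_gt m : forall c w, (m < c)%nat -> ~ cnt m c w.
Proof.
  induction m; simpl; intros c w Hc.
  - intro; subst; lia.
  - intros [[_ H]|[_ H]]; [apply (IHm c w); [lia|auto]|].
    destruct c; [auto|apply (IHm c w); [lia|auto]].
Qed.

Lemma cnt0 m w : cnt m 0 w -> forall i, (i < m)%nat -> ~ A i w.
Proof.
  induction m; simpl; intros H i Hi; [lia|].
  destruct H as [[Hn H]|[_ []]].
  destruct (Nat.eq_dec i m); [subst; auto|apply IHm; auto; lia].
Qed.

Lemma cntS_ex m : forall c w, cnt m (S c) w -> exists i, (i < m)%nat /\ A i w.
Proof.
  induction m; simpl; intros c w H; [discriminate|].
  destruct H as [[_ H]|[Ha H]].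
  - destruct (IHm c w H) as [i [Hi Ha]]. exists i; split; auto; lia.
  - exists m; split; auto.
Qed.

Variable P : prob_space Omega.
Variable L : nat.
Hypothesis hA : forall i, (i < L)%nat -> measurable P (A i).

Lemma meas_cnt m : (m <= L)%nat -> forall c, measurable P (cnt m c).
Proof.
  induction m; intros Hm c.
  - change (cnt 0 c) with (fun _ : Omega => c = 0%nat). apply meas_prop.
  - change (cnt (S m) c) with (fun w => (~ A m w /\ cnt m c w) \/ (A m w /\ cntS m c w)).
    apply meas_or; apply meas_and.
    + apply meas_compl, hA; lia.
    + apply IHm; lia.
    + apply hA; lia.
    + destruct c; [apply meas_empty|apply IHm; lia].
Qed.

Lemma step (w' w : nat -> R) (Hw : forall c, w' (S c) = w' c + w c) m (HmL : (m < L)%nat) E (HE : measurable P E) :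
  sumR (S L) (fun c => w' c * pr P (fun x => E x /\ cnt (S m) c x)) =
  sumR (S L) (fun c => w' c * pr P (fun x => E x /\ cnt m c x)) +
  sumR (S L) (fun c => w c * pr P (fun x => (A m x /\ E x) /\ cnt m c x)).
Proof.
  assert (HAm : measurable P (A m)) by (apply hA; lia).
  assert (Hc : forall c, measurable P (cnt m c)) by (apply meas_cnt; lia).
  rewrite (sumR_ext (S L) (fun c => w' c * pr P (fun x => E x /\ cnt (S m) c x))
     (fun c => w' c * (pr P (fun v => E v /\ ~ A m v /\ cnt m c v) + pr P (fun v => E v /\ A m v /\ cntS m c v)))).
  rewrite (sumR_ext (S L) (fun c => w' c * pr P (fun x => E x /\ cnt m c x))
     (fun c => w' c * (pr P (fun v => E v /\ ~ A m v /\ cnt m c v) + pr P (fun v => (A m v /\ E v) /\ cnt m c v)))).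
  - apply sum_step; auto.
    + unfold cntS. replace (fun v => E v /\ A m v /\ False) with (fun _ : Omega => False)
        by (apply ev_eq; tauto). apply pr_empty.
    + intros c. f_equal. apply ev_eq. intros v; unfold cntS; tauto.
    + replace (fun v => (A m v /\ E v) /\ cnt m L v) with (fun _ : Omega => False).
      apply pr_empty. apply ev_eq. intros v. pose proof (cnt_gt m L v HmL). tauto.
  - intros c _. f_equal. rewrite <- pr_add2.
    + f_equal. apply ev_eq. intros v. destruct (classic (A m v)); tauto.
    + apply meas_and; auto. apply meas_and; auto. apply meas_compl; auto.
    + repeat apply meas_and; auto.
    + intros v; tauto.
  - intros c _. f_equal. rewrite <- pr_add2.
    + f_equal. apply ev_eq. intros v. unfold cntS. simpl. tauto.
    + apply meas_and; auto. apply meas_and; auto. apply meas_compl; auto.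
    + apply meas_and; auto. apply meas_and; auto. destruct c; [apply meas_empty|apply Hc].
    + intros v; tauto.
Qed.

Lemma base (w : nat -> R) E : sumR (S L) (fun c => w c * pr P (fun x => E x /\ cnt 0 c x)) = w 0%nat * pr P E.
Proof.
  rewrite sumR_shift. rewrite (sumR_ext L _ (fun _ => 0)).
  - rewrite sumR_zero. replace (fun x => E x /\ cnt 0 0 x) with E. ring.
    apply ev_eq. intros v; simpl; tauto.
  - intros c _. replace (fun x => E x /\ cnt 0 (S c) x) with (fun _ : Omega => False).
    rewrite pr_empty; ring. apply ev_eq. intros v; simpl; split; [tauto|intros [_ H]; discriminate].
Qed.

Definition w0 (c : nat) : R := 1.
Definition w1 (c : nat) : R := INR c.
Definition w2 (c : nat) : R := INR c * (INR c - 1) / 2.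
Definition w3 (c : nat) : R := INR c * (INR c - 1) * (INR c - 2) / 6.
Definition wz (c : nat) : R := 0.

Lemma Hw0 c : w0 (S c) = w0 c + wz c. Proof. unfold w0, wz; ring. Qed.
Lemma Hw1 c : w1 (S c) = w1 c + w0 c. Proof. unfold w0, w1; rewrite S_INR; ring. Qed.
Lemma Hw2 c : w2 (S c) = w2 c + w1 c. Proof. unfold w2, w1; rewrite S_INR; field. Qed.
Lemma Hw3 c : w3 (S c) = w3 c + w2 c. Proof. unfold w3, w2; rewrite S_INR; field. Qed.

Lemma sumR_wz n f : sumR n (fun c => wz c * f c) = 0.
Proof. unfold wz. rewrite (sumR_ext n _ (fun _ => 0)) by (intros; ring). apply sumR_zero. Qed.

Lemma level0 m : (m <= L)%nat -> forall E, measurable P E ->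
  pr P E = sumR (S L) (fun c => w0 c * pr P (fun x => E x /\ cnt m c x)).
Proof.
  induction m; intros Hm E HE.
  - rewrite base. unfold w0; ring.
  - rewrite (step w0 wz Hw0 m ltac:(lia) E HE). rewrite sumR_wz. rewrite <- (IHm ltac:(lia) E HE). ring.
Qed.

Lemma level1 m : (m <= L)%nat -> forall E, measurable P E ->
  sumR m (fun i => pr P (fun x => A i x /\ E x)) = sumR (S L) (fun c => w1 c * pr P (fun x => E x /\ cnt m c x)).
Proof.
  induction m; intros Hm E HE.
  - rewrite base. unfold w1; simpl; ring.
  - rewrite (step w1 w0 Hw1 m ltac:(lia) E HE). rewrite <- (IHm ltac:(lia) E HE).
    rewrite <- (level0 m ltac:(lia) (fun v => A m v /\ E v) (meas_and _ _ _ _ (hA m ltac:(lia)) HE)).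
    reflexivity.
Qed.

Lemma level2 m : (m <= L)%nat -> forall E, measurable P E ->
  sumR m (fun j => sumR j (fun i => pr P (fun x => A i x /\ A j x /\ E x))) =
  sumR (S L) (fun c => w2 c * pr P (fun x => E x /\ cnt m c x)).
Proof.
  induction m; intros Hm E HE.
  - rewrite base. unfold w2; simpl; field.
  - rewrite (step w2 w1 Hw2 m ltac:(lia) E HE). rewrite <- (IHm ltac:(lia) E HE).
    rewrite <- (level1 m ltac:(lia) (fun v => A m v /\ E v) (meas_and _ _ _ _ (hA m ltac:(lia)) HE)).
    reflexivity.
Qed.

Lemma level3 m : (m <= L)%nat -> forall E, measurable P E ->
  sumR m (fun k => sumR k (fun j => sumR j (fun i => pr P (fun x => A i x /\ A j x /\ A k x /\ E x)))) =
  sumR (S L) (fun c => w3 c * pr P (fun x => E x /\ cnt m c x)).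
Proof.
  induction m; intros Hm E HE.
  - rewrite base. unfold w3; simpl; field.
  - rewrite (step w3 w2 Hw3 m ltac:(lia) E HE). rewrite <- (IHm ltac:(lia) E HE).
    rewrite <- (level2 m ltac:(lia) (fun v => A m v /\ E v) (meas_and _ _ _ _ (hA m ltac:(lia)) HE)).
    reflexivity.
Qed.
End Count.
Lemma key_ineq (N x : R) : 3 <= N -> 1 <= x <= N ->
  (x - 1 = 0 \/ x - 1 >= 1) -> (N - x = 0 \/ N - x >= 1) ->
  (x - 1) * (N - x) * (N - x - 1) <= N * (N - 1) * (N - 3).
Proof.
  intros HN Hx Ha Hb.
  set (a := x - 1) in *. set (b := N - x) in *.
  assert (HNab : N = a + b + 1) by (unfold a, b; ring).
  assert (H0 : 0 <= N * (N - 1) * (N - 3)) by (repeat apply Rmult_le_pos; lra).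
  destruct Ha as [Ha|Ha]; [rewrite Ha, !Rmult_0_l; lra|].
  destruct Hb as [Hb|Hb]; [rewrite Hb, Rmult_0_r, Rmult_0_l; lra|].
  assert (Hab : a * b <= N * (N - 1)) by nra.
  assert (H1 : 0 <= b - 1 <= N - 3) by lra.
  assert (a * b * (b - 1) <= N * (N - 1) * (b - 1)) by (apply Rmult_le_compat_r; lra).
  assert (N * (N - 1) * (b - 1) <= N * (N - 1) * (N - 3)) by (apply Rmult_le_compat_l; nra).
  replace (N - x - 1) with (b - 1) by (unfold b; ring). lra.
Qed.

Lemma poly_le n c : (3 <= n)%nat -> (1 <= c <= n)%nat ->
  / (INR n - 2) * (w1 c - (2 * INR n - 3) / C n 2 * w2 c + 3 / C n 2 * w3 c) <= 1.
Proof.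
  intros Hn Hc. rewrite C_n_2 by lia. unfold w1, w2, w3.
  assert (HN : 3 <= INR n) by (apply le_INR in Hn; simpl in Hn; lra).
  assert (Hx : 1 <= INR c <= INR n) by (split; [assert (H1c : (1 <= c)%nat) by lia; apply le_INR in H1c; simpl in H1c; lra| apply le_INR; lia]).
  assert (Ha : INR c - 1 = 0 \/ INR c - 1 >= 1).
  { destruct (Nat.eq_dec c 1); [subst; simpl; lra|]. right.
    assert (H2 : (2 <= c)%nat) by lia. apply le_INR in H2. simpl in H2. lra. }
  assert (Hb : INR n - INR c = 0 \/ INR n - INR c >= 1).
  { destruct (Nat.eq_dec c n); [subst; lra|]. right.
    assert (H2 : (S c <= n)%nat) by lia. apply le_INR in H2. rewrite S_INR in H2. lra. }
  pose proof (key_ineq (INR n) (INR c) HN Hx Ha Hb) as K.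
  set (N := INR n) in *. set (x := INR c) in *.
  assert (HD : 0 < N * (N - 1) * (N - 2)) by (apply Rmult_lt_0_compat; [apply Rmult_lt_0_compat|]; lra).
  replace (/ (N - 2) * (x - (2 * N - 3) / (N * (N - 1) / 2) * (x * (x - 1) / 2) +
      3 / (N * (N - 1) / 2) * (x * (x - 1) * (x - 2) / 6)))
    with (1 - (N * (N - 1) * (N - 3) - (x - 1) * (N - x) * (N - x - 1)) / (N * (N - 1) * (N - 2)))
    by (field; repeat split; lra).
  assert (0 <= (N * (N - 1) * (N - 3) - (x - 1) * (N - x) * (N - x - 1)) / (N * (N - 1) * (N - 2))).
  { apply Rmult_le_pos; [lra|left; apply Rinv_0_lt_compat; auto]. }
  lra.
Qed.

Theorem corollary4 (Omega : Type) (P : prob_space Omega) (n : nat)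
  (hn : (3 <= n)%nat) (A : nat -> (Omega -> Prop))
  (hA : forall i, (i < n)%nat -> measurable P (A i)) :
  pr P (fun w => exists i, (i < n)%nat /\ A i w) >=
  / (INR n - 2) *
  ( sumR n (fun i => pr P (A i))
    - (2 * INR n - 3) / C n 2 *
        sumR n (fun j => sumR j (fun i => pr P (fun w => A i w /\ A j w)))
    + 3 / C n 2 *
        sumR n (fun k => sumR k (fun j => sumR j (fun i =>
            pr P (fun w => A i w /\ A j w /\ A k w))))).
Proof.
  set (T := fun _ : Omega => True).
  assert (MT : measurable P T) by apply meas_full.
  pose proof (level1 Omega A P n hA n (le_n n) T MT) as H1.
  pose proof (level2 Omega A P n hA n (le_n n) T MT) as H2.
  pose proof (level3 Omega A P n hA n (le_n n) T MT) as H3.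
  set (U := fun w => exists i, (i < n)%nat /\ A i w).
  assert (MU : measurable P U).
  { apply meas_cunion. intros i. destruct (Nat.lt_ge_cases i n) as [Hi|Hi].
    - apply meas_and; [apply meas_prop|auto].
    - replace (fun w => (i < n)%nat /\ A i w) with (fun _ : Omega => False).
      apply meas_empty. apply ev_eq. intros; split; [tauto|lia]. }
  pose proof (level0 Omega A P n hA n (le_n n) U MU) as H0.
  rewrite (sumR_ext n (fun i => pr P (A i)) (fun i => pr P (fun x => A i x /\ T x)))
    by (intros; f_equal; apply ev_eq; unfold T; tauto).
  rewrite (sumR_ext n (fun j => sumR j (fun i => pr P (fun w => A i w /\ A j w)))
     (fun j => sumR j (fun i => pr P (fun x => A i x /\ A j x /\ T x))))
    by (intros; apply sumR_ext; intros; f_equal; apply ev_eq; unfold T; tauto).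
  rewrite (sumR_ext n (fun k => sumR k (fun j => sumR j (fun i => pr P (fun w => A i w /\ A j w /\ A k w))))
     (fun k => sumR k (fun j => sumR j (fun i => pr P (fun x => A i x /\ A j x /\ A k x /\ T x)))))
    by (intros; apply sumR_ext; intros; apply sumR_ext; intros; f_equal; apply ev_eq; unfold T; tauto).
  rewrite H1, H2, H3, H0.
  rewrite <- sumR_lin3.
  apply Rle_ge, sumR_le. intros c Hc.
  assert (Mq : measurable P (fun x => T x /\ cnt Omega A n c x)).
  { apply meas_and; auto. apply (meas_cnt Omega A P n hA n (le_n n)). }
  pose proof (pr_nonneg _ P _ Mq) as Hq.
  destruct c as [|c].
  - replace (fun x => U x /\ cnt Omega A n 0 x) with (fun _ : Omega => False).
    + rewrite pr_empty. unfold w1, w2, w3. simpl INR. right; field.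
      rewrite C_n_2 by lia. apply le_INR in hn. simpl in hn. split; [|lra].
      intro Hz. apply Rmult_integral in Hz. destruct Hz as [Hz|Hz]; [|lra].
      apply Rmult_integral in Hz. lra.
    + apply ev_eq. intros v; split; [tauto|]. intros [[i [Hi Ha]] Hv].
      exact (cnt0 Omega A n v Hv i Hi Ha).
  - replace (fun x => U x /\ cnt Omega A n (S c) x) with (fun x => T x /\ cnt Omega A n (S c) x).
    + unfold w0. rewrite Rmult_1_l. rewrite <- (Rmult_1_l (pr P _)) at 2.
      apply Rmult_le_compat_r; auto. apply poly_le; lia.
    + apply ev_eq. intros v; split; intros [_ Hv]; split; unfold T, U; auto.
      apply (cntS_ex Omega A n c v Hv).
Qed.
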